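(* Consider the one-step-ahead prediction problem described in the context, with nonrandomized decisions $\delta=(\delta_0,\delta_1)\in\mathcal D=[0,1]^2$ and the Kullback–Leibler risk $R_\delta(\theta)$. Let $\mathcal C_{<}=\{(\delta_0,\delta_1):0<\delta_0<\delta_1<1\}$, $\mathcal C_{=}=\{(\delta_0,\delta_1):0<\delta_0=\delta_1<1\}$, $\mathcal M=\{(0,1)\}$. Then the class $\mathcal A=\mathcal C_{<}\cup\mathcal C_{=}\cup\mathcal M$ is the minimal complete class within $\mathcal D$. In particular, $\mathcal A$ is exactly the set of admissible decisions in $\mathcal D$.
   Context: Bernoulli model: for $\theta\in[0,1]$, $p_\theta(x)=\theta^x(1-\theta)^{1-x}$, $x\in\{0,1\}$. One observes $x\sim p_\theta$ and predicts an independent future $y\sim p_\theta$. A nonrandomized decision is a pair $\delta=(\delta_0,\delta_1)\in\mathcal D=[0,1]^2$, used as the predictive distribution $p_\delta(y\mid x)=\delta_x^{\,y}(1-\delta_x)^{1-y}$. The loss is the Kullback–Leibler divergence $L(\theta,\delta_x)=\theta\log\frac{\theta}{\delta_x}+(1-\theta)\log\frac{1-\theta}{1-\delta_x}$, with the conventions $0\log(0/q)=0$ for every $q\in[0,1]$, $c\log(c/0)=+\infty$ for $c>0$, and $0\cdot(+\infty)=0$. The risk is $R_\delta(\theta)=(1-\theta)L(\theta,\delta_0)+\theta L(\theta,\delta_1)\in[0,+\infty]$, equivalently $R_\delta(\theta)=-S(\theta)+\theta^2\log\frac1{\delta_1}+\theta(1-\theta)\log\frac1{1-\delta_1}+\theta(1-\theta)\log\frac1{\delta_0}+(1-\theta)^2\log\frac1{1-\delta_0}$,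 where $S(\theta)=-\theta\log\theta-(1-\theta)\log(1-\theta)$ is the binary entropy. A decision $\delta'$ dominates $\delta$ if $R_{\delta'}(\theta)\le R_\delta(\theta)$ for all $\theta\in[0,1]$ with strict inequality for some $\theta$. A decision is admissible if no decision in $\mathcal D$ dominates it. A class $\mathcal C\subseteq\mathcal D$ is complete if every $\delta\in\mathcal D\setminus\mathcal C$ is dominated by some element of $\mathcal C$; it is minimal complete if it is complete and no proper subset of it is complete. *)

(* Defs.v *)
From Stdlib Require Import Reals.
Open Scope R_scope.

Inductive ER : Type := Fin (r : R) | PInf.

Definition er_add (x y : ER) : ER :=
  match x, y with
  | Fin a, Fin b => Fin (a + b)
  | _, _ => PInf
  end.

(* multiplication by a nonnegative real c, with 0 * (+oo) = 0 *)
Definition er_scale (c : R) (x : ER) : ER :=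
  match x with
  | Fin a => Fin (c * a)
  | PInf => if Req_EM_T c 0 then Fin 0 else PInf
  end.

Definition er_le (x y : ER) : Prop :=
  match x, y with
  | Fin a, Fin b => a <= b
  | _, PInf => True
  | PInf, Fin _ => False
  end.

Definition er_lt (x y : ER) : Prop := er_le x y /\ x <> y.

(* c log (c/d) with conventions 0 log(0/q) = 0 and c log(c/0) = +oo for c>0 *)
Definition xlogxy (c d : R) : ER :=
  if Req_EM_T c 0 then Fin 0
  else if Req_EM_T d 0 then PInf
  else Fin (c * ln (c / d)).

Definition KL (theta q : R) : ER :=
  er_add (xlogxy theta q) (xlogxy (1 - theta) (1 - q)).

Definition decision := (R * R)%type.

Definition InD (d : decision) : Prop :=
  0 <= fst d <= 1 /\ 0 <= snd d <= 1.

Definition risk (d : decision) (theta : R) : ER :=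
  er_add (er_scale (1 - theta) (KL theta (fst d)))
         (er_scale theta (KL theta (snd d))).

Definition dominates (d' d : decision) : Prop :=
  (forall theta, 0 <= theta <= 1 -> er_le (risk d' theta) (risk d theta)) /\
  (exists theta, 0 <= theta <= 1 /\ er_lt (risk d' theta) (risk d theta)).

Definition admissible (d : decision) : Prop :=
  InD d /\ ~ (exists d', InD d' /\ dominates d' d).

Definition complete (C : decision -> Prop) : Prop :=
  (forall d, C d -> InD d) /\
  (forall d, InD d -> ~ C d -> exists d', C d' /\ dominates d' d).

Definition minimal_complete (C : decision -> Prop) : Prop :=
  complete C /\
  (forall C' : decision -> Prop,
      (forall d, C' d -> C d) -> (exists d, C d /\ ~ C' d) -> ~ complete C').

Definition C_lt (d : decision) : Prop := 0 < fst d < snd d /\ snd d < 1.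
Definition C_eq (d : decision) : Prop := 0 < fst d /\ fst d = snd d /\ snd d < 1.
Definition M_cls (d : decision) : Prop := d = (0, 1).

Definition A_cls (d : decision) : Prop := C_lt d \/ C_eq d \/ M_cls d.

(* Main.v *)
Require Import Defs.
From Stdlib Require Import Reals Lra Psatz Classical.
Open Scope R_scope.

Lemma ln_le_m1 x : 0 < x -> ln x <= x - 1.
Proof. intro Hx. pose proof (exp_ineq1_le (ln x)). rewrite exp_ln in H; lra. Qed.

Lemma ln_lt_m1 x : 0 < x -> x <> 1 -> ln x < x - 1.
Proof. intros Hx H1. pose proof (exp_ineq1 (ln x) (ln_neq_0 x H1 Hx)).
  rewrite exp_ln in H; lra. Qed.

Lemma ln_div' p q : 0 < p -> 0 < q -> ln (q / p) = ln q - ln p.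
Proof. intros. unfold Rdiv. rewrite ln_mult, ln_Rinv; try lra.
  apply Rinv_0_lt_compat; lra. Qed.

Lemma lnbm p q : 0 < p -> 0 < q -> p - q <= p * (ln p - ln q).
Proof. intros Hp Hq. pose proof (ln_le_m1 (q/p)).
  rewrite ln_div' in H by lra.
  assert (H' : ln q - ln p <= q / p - 1) by (apply H; apply Rdiv_lt_0_compat; lra).
  apply Rmult_le_compat_l with (r := p) in H'; [|lra].
  replace (p * (q / p - 1)) with (q - p) in H' by (field; lra). lra. Qed.

Lemma lnbms p q : 0 < p -> 0 < q -> p <> q -> p - q < p * (ln p - ln q).
Proof. intros Hp Hq Hne. pose proof (ln_lt_m1 (q/p)).
  rewrite ln_div' in H by lra.
  assert (H' : ln q - ln p < q / p - 1).
  { apply H. apply Rdiv_lt_0_compat; lra. intro E.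
    apply Hne. apply (Rmult_eq_compat_l p) in E.
    replace (p * (q/p)) with q in E by (field; lra). lra. }
  apply Rmult_lt_compat_l with (r := p) in H'; [|lra].
  replace (p * (q / p - 1)) with (q - p) in H' by (field; lra). lra. Qed.

Definition xl (c : R) : R := if Req_EM_T c 0 then 0 else c * ln c.
Definition nH (t : R) : R := xl t + xl (1 - t).

Lemma xlog_pos c d : 0 <= c -> 0 < d -> xlogxy c d = Fin (xl c - c * ln d).
Proof. intros Hc Hd. unfold xlogxy, xl. destruct (Req_EM_T c 0).
  - subst. f_equal. ring.
  - destruct (Req_EM_T d 0); [lra|]. f_equal. rewrite ln_div' by lra. ring. Qed.

Lemma xlog0 d : xlogxy 0 d = Fin 0.
Proof. unfold xlogxy. destruct (Req_EM_T 0 0); [reflexivity|lra]. Qed.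

Lemma xl1 : xl 1 = 0.
Proof. unfold xl. destruct (Req_EM_T 1 0); [lra|]. rewrite ln_1; ring. Qed.

Definition P (t a b : R) : R :=
  nH t + t*(1-t)*(- ln a) + (1-t)*(1-t)*(- ln (1-a)) + t*t*(- ln b) + t*(1-t)*(- ln (1-b)).

Lemma KL_int t q : 0 <= t <= 1 -> 0 < q < 1 ->
  KL t q = Fin (nH t - t * ln q - (1-t) * ln (1-q)).
Proof. intros Ht Hq. unfold KL. rewrite !xlog_pos by lra. simpl. f_equal.
  unfold nH; ring. Qed.

Lemma risk_int a b t : 0 < a < 1 -> 0 < b < 1 -> 0 <= t <= 1 ->
  risk (a, b) t = Fin (P t a b).
Proof. intros Ha Hb Ht. unfold risk. cbn [fst snd]. rewrite !KL_int by lra.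
  simpl. f_equal. unfold P. ring. Qed.

Lemma er_scale_0 x : er_scale 0 x = Fin 0.
Proof. destruct x; simpl. f_equal; ring. destruct (Req_EM_T 0 0); [reflexivity|lra]. Qed.
Lemma er_scale_1 x : er_scale 1 x = x.
Proof. destruct x; simpl. f_equal; ring. destruct (Req_EM_T 1 0); [lra|reflexivity]. Qed.
Lemma er_scale_pinf c : c <> 0 -> er_scale c PInf = PInf.
Proof. intro; simpl. destruct (Req_EM_T c 0); [lra|reflexivity]. Qed.
Lemma er_add_pinf_l x : er_add PInf x = PInf.
Proof. destruct x; reflexivity. Qed.
Lemma er_add_pinf_r x : er_add x PInf = PInf.
Proof. destruct x; reflexivity. Qed.

Lemma risk0 d : risk d 0 = er_add (KL 0 (fst d)) (Fin 0).
Proof. unfold risk. replace (1-0) with 1 by ring. rewrite er_scale_1, er_scale_0. reflexivity. Qed.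
Lemma risk1 d : risk d 1 = er_add (Fin 0) (KL 1 (snd d)).
Proof. unfold risk. replace (1-1) with 0 by ring. rewrite er_scale_1, er_scale_0. reflexivity. Qed.

Lemma KL0 q : 0 <= q < 1 -> KL 0 q = Fin (- ln (1-q)).
Proof. intro Hq. unfold KL. rewrite xlog0. replace (1-0) with 1 by ring.
  rewrite xlog_pos by lra. rewrite xl1. simpl. f_equal. ring. Qed.
Lemma KL0_1 : KL 0 1 = PInf.
Proof. unfold KL. rewrite xlog0. replace (1-0) with 1 by ring. replace (1-1) with 0 by ring.
  unfold xlogxy. destruct (Req_EM_T 1 0); [lra|]. destruct (Req_EM_T 0 0); [reflexivity|lra]. Qed.
Lemma KL1 q : 0 < q <= 1 -> KL 1 q = Fin (- ln q).
Proof. intro Hq. unfold KL. replace (1-1) with 0 by ring. rewrite xlog0.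
  rewrite xlog_pos by lra. rewrite xl1. simpl. f_equal. ring. Qed.
Lemma KL1_0 : KL 1 0 = PInf.
Proof. unfold KL. unfold xlogxy. destruct (Req_EM_T 1 0); [lra|]. destruct (Req_EM_T 0 0); [|lra].
  reflexivity. Qed.
Lemma KL_inf t q : 0 < t < 1 -> q = 0 \/ q = 1 -> KL t q = PInf.
Proof. intros Ht [-> | ->]; unfold KL, xlogxy;
  repeat destruct Req_EM_T; simpl; try lra; try reflexivity. Qed.

Lemma er_lt_irr x : ~ er_lt x x.
Proof. intros [_ H]; auto. Qed.
Lemma dom_irr d : ~ dominates d d.
Proof. intros [_ [t [_ H]]]. eapply er_lt_irr; eauto. Qed.
Lemma er_lt_fin r s : r < s -> er_lt (Fin r) (Fin s).
Proof. intro; split; simpl; [lra| intro E; injection E; lra]. Qed.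
Lemma er_lt_pinf r : er_lt (Fin r) PInf.
Proof. split; simpl; [auto | discriminate]. Qed.

Lemma P_le_1 x y a b : P 1 x y <= P 1 a b -> - ln y <= - ln b.
Proof. unfold P. intro H. lra. Qed.

Lemma adm_int_eq a b x y : 0 < a <= b -> b < 1 -> 0 < x < 1 -> 0 < y < 1 ->
  P 1 x y <= P 1 a b -> P a x y <= P a a b -> x = a /\ y = b.
Proof. intros Ha Hb Hx Hy H1 H2. apply P_le_1 in H1. unfold P in H2.
  set (u := ln b - ln y) in *. set (v := ln (1-b) - ln (1-y)).
  set (s := ln a - ln x). set (t := ln (1-a) - ln (1-x)).
  assert (E2 : (1-a)*(a*s + (1-a)*t) + a*a*u + a*(1-a)*v <= 0).
  { unfold u, v, s, t. lra. }
  assert (Hu : u <= 0) by (unfold u; lra).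
  assert (Q : a*(1-a)*(b*u + (1-b)*v) + (1-b)*(1-a)*(a*s+(1-a)*t) <= 0).
  { assert (0 <= 1 - b) by lra. assert (0 <= a*(b-a)) by nra.
    assert ((1-b)*((1-a)*(a*s + (1-a)*t) + a*a*u + a*(1-a)*v) <= 0) by nra.
    assert (a*(b-a)*u <= 0) by nra. nra. }
  pose proof (lnbm a x (proj1 Ha) (proj1 Hx)) as Ks.
  pose proof (lnbm (1-a) (1-x) ltac:(lra) ltac:(lra)) as Kt.
  pose proof (lnbm b y ltac:(lra) (proj1 Hy)) as Ku.
  pose proof (lnbm (1-b) (1-y) ltac:(lra) ltac:(lra)) as Kv.
  fold s t u v in Ks, Kt, Ku, Kv.
  assert (Ky : 0 <= b*u + (1-b)*v) by lra.
  assert (Kx : 0 <= a*s + (1-a)*t) by lra.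
  assert (P1 : 0 < a*(1-a)) by nra. assert (P2 : 0 < (1-b)*(1-a)) by nra.
  split.
  - destruct (Req_dec x a) as [|Hne]; [auto|exfalso].
    pose proof (lnbms a x (proj1 Ha) (proj1 Hx) (fun e => Hne (eq_sym e))) as Ss.
    fold s in Ss. assert (0 < a*s + (1-a)*t) by lra. nra.
  - destruct (Req_dec y b) as [|Hne]; [auto|exfalso].
    pose proof (lnbms b y ltac:(lra) (proj1 Hy) (fun e => Hne (eq_sym e))) as Ss.
    fold u in Ss. assert (0 < b*u + (1-b)*v) by lra. nra.
Qed.

Lemma adm_int a b : 0 < a <= b -> b < 1 -> admissible (a, b).
Proof. intros Ha Hb. split; [unfold InD; simpl; lra|].
  intros [[x y] [HD Hdom]]. pose proof Hdom as Hdom'.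
  destruct Hdom as [Hle _]. unfold InD in HD; simpl in HD.
  pose proof (Hle 1 ltac:(lra)) as H1. pose proof (Hle a ltac:(lra)) as H2.
  rewrite (risk_int a b) in H1, H2 by lra.
  assert (Hy0 : y <> 0).
  { intro E. subst y. rewrite risk1 in H1. simpl in H1. rewrite KL1_0 in H1. exact H1. }
  assert (Hy1 : y <> 1).
  { intro E. subst y. unfold risk in H2. cbn [fst snd] in H2.
    rewrite (KL_inf a 1) in H2 by lra. rewrite er_scale_pinf in H2 by lra.
    rewrite er_add_pinf_r in H2. exact H2. }
  assert (Hx : x <> 0 /\ x <> 1).
  { split; intro E; subst x; unfold risk in H2; cbn [fst snd] in H2;
    rewrite (KL_inf a) in H2 by lra; rewrite er_scale_pinf in H2 by lra;
    rewrite er_add_pinf_l in H2; exact H2. }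
  rewrite (risk_int x y) in H1, H2 by lra. simpl in H1, H2.
  destruct (adm_int_eq a b x y) as [-> ->]; try lra.
  exact (dom_irr _ Hdom').
Qed.

Lemma ln_pos_lt u : 0 < u < 1 -> ln u < 0.
Proof. intro. rewrite <- ln_1. apply ln_increasing; lra. Qed.

Lemma adm_M : admissible (0, 1).
Proof. split; [unfold InD; simpl; lra|].
  intros [[x y] [HD Hdom]]. pose proof Hdom as Hdom'.
  destruct Hdom as [Hle _]. unfold InD in HD; simpl in HD.
  pose proof (Hle 0 ltac:(lra)) as H0. pose proof (Hle 1 ltac:(lra)) as H1.
  rewrite !risk0 in H0. rewrite !risk1 in H1. cbn [fst snd] in H0, H1.
  rewrite (KL0 0) in H0 by lra. rewrite (KL1 1) in H1 by lra.
  replace (1-0) with 1 in H0 by ring. rewrite ln_1 in H0, H1.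
  assert (x = 0).
  { destruct (Req_dec x 1) as [E|E]. subst. rewrite KL0_1 in H0. exact (False_ind _ H0).
    rewrite KL0 in H0 by lra. simpl in H0.
    destruct (Req_dec x 0); auto. pose proof (ln_pos_lt (1-x)). lra. }
  assert (y = 1).
  { destruct (Req_dec y 0) as [E|E]. subst. rewrite KL1_0 in H1. exact (False_ind _ H1).
    rewrite KL1 in H1 by lra. simpl in H1.
    destruct (Req_dec y 1); auto. pose proof (ln_pos_lt y). lra. }
  subst. exact (dom_irr _ Hdom').
Qed.

Lemma A_adm d : A_cls d -> admissible d.
Proof. destruct d as [a b]. unfold A_cls, C_lt, C_eq, M_cls; simpl.
  intros [H|[H|H]].
  - apply adm_int; lra.
  - apply adm_int; lra.
  - rewrite H. exact adm_M.
Qed.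

Lemma cmp_ineq a b t : 0 < b < a -> a < 1 -> 0 <= t <= 1 ->
  let c := a / (1 + a - b) in P t c c <= P t a b.
Proof. intros Hb Ha Ht c.
  assert (Hc : c * (1 + a - b) = a) by (unfold c; field; lra).
  assert (Hc0 : 0 < c) by (unfold c; apply Rdiv_lt_0_compat; lra).
  assert (Hc1 : c < 1) by nra. clearbody c.
  unfold P.
  pose proof (lnbm c a Hc0 ltac:(lra)) as K1.
  pose proof (lnbm c b Hc0 ltac:(lra)) as K2.
  pose proof (lnbm (1-c) (1-a) ltac:(lra) ltac:(lra)) as K3.
  pose proof (lnbm (1-c) (1-b) ltac:(lra) ltac:(lra)) as K4.
  set (A1 := ln c - ln a) in *. set (A2 := ln c - ln b) in *.
  set (A3 := ln (1-c) - ln (1-a)) in *. set (A4 := ln (1-c) - ln (1-b)) in *.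
  assert (D : 0 <= t*(1-t)*A1 + t*t*A2 + (1-t)*(1-t)*A3 + t*(1-t)*A4).
  { assert (Hcc : 0 < c*(1-c)) by nra.
    assert (0 <= t*(1-t)) by nra.
    assert (e1 : t*(1-t)*(1-c)*(c - a) <= t*(1-t)*(1-c)*(c*A1)).
    { apply Rmult_le_compat_l; [repeat apply Rmult_le_pos; lra|lra]. }
    assert (e2 : t*t*(1-c)*(c - b) <= t*t*(1-c)*(c*A2)).
    { apply Rmult_le_compat_l; [repeat apply Rmult_le_pos; lra|lra]. }
    assert (e3 : (1-t)*(1-t)*c*((1-c) - (1-a)) <= (1-t)*(1-t)*c*((1-c)*A3)).
    { apply Rmult_le_compat_l; [repeat apply Rmult_le_pos; lra|lra]. }
    assert (e4 : t*(1-t)*c*((1-c) - (1-b)) <= t*(1-t)*c*((1-c)*A4)).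
    { apply Rmult_le_compat_l; [repeat apply Rmult_le_pos; lra|lra]. }
    assert (S : 0 <= c*(1-c)*(t*(1-t)*A1 + t*t*A2 + (1-t)*(1-t)*A3 + t*(1-t)*A4)).
    { assert (Id : t*(1-t)*(1-c)*(c - a) + t*t*(1-c)*(c - b) + (1-t)*(1-t)*c*((1-c) - (1-a))
            + t*(1-t)*c*((1-c) - (1-b)) = (a-b)*(t-c)*(t-c)).
      { transitivity (((1-t)*(c-a) + t*(c-b))*(t-c)); [ring|].
        replace ((1-t)*(c-a)+t*(c-b)) with ((a-b)*(t-c)); [ring|lra]. }
      assert (0 <= (a-b)*((t-c)*(t-c))) by (apply Rmult_le_pos; [lra| pose proof (Rle_0_sqr (t-c)) as Hsq; unfold Rsqr in Hsq; exact Hsq]).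
      assert (Eq : c*(1-c)*(t*(1-t)*A1 + t*t*A2 + (1-t)*(1-t)*A3 + t*(1-t)*A4) =
        t*(1-t)*(1-c)*(c*A1) + t*t*(1-c)*(c*A2) + (1-t)*(1-t)*c*((1-c)*A3) + t*(1-t)*c*((1-c)*A4)) by ring.
      rewrite Eq.
      assert (Eq2 : (a-b)*((t-c)*(t-c)) = (a-b)*(t-c)*(t-c)) by ring.
      rewrite <- Id in Eq2.
      apply Rle_trans with ((a-b)*((t-c)*(t-c))); [assumption|]. rewrite Eq2.
      repeat apply Rplus_le_compat; assumption. }
    apply (Rmult_le_reg_l (c*(1-c))); [exact Hcc|]. rewrite Rmult_0_r. exact S. }
  assert (Eq : nH t + t * (1 - t) * - ln a + (1 - t) * (1 - t) * - ln (1 - a) + t * t * - ln b +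
    t * (1 - t) * - ln (1 - b) - (nH t + t * (1 - t) * - ln c + (1 - t) * (1 - t) * - ln (1 - c) + t * t * - ln c +
    t * (1 - t) * - ln (1 - c)) = t*(1-t)*A1 + t*t*A2 + (1-t)*(1-t)*A3 + t*(1-t)*A4) by (unfold A1, A2, A3, A4; ring).
  apply Rge_le, Rminus_ge. rewrite Eq. apply Rle_ge. exact D.
Qed.

Lemma risk01_0 : risk (0,1) 0 = Fin 0.
Proof. rewrite risk0. cbn [fst]. rewrite KL0 by lra. replace (1-0) with 1 by ring.
  rewrite ln_1. simpl. f_equal. ring. Qed.
Lemma risk01_1 : risk (0,1) 1 = Fin 0.
Proof. rewrite risk1. cbn [snd]. rewrite KL1 by lra. rewrite ln_1. simpl. f_equal. ring. Qed.
Lemma risk01_mid t : 0 < t < 1 -> risk (0,1) t = PInf.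
Proof. intro. unfold risk; cbn [fst snd]. rewrite (KL_inf t 0) by lra.
  rewrite er_scale_pinf by lra. apply er_add_pinf_l. Qed.

Lemma risk_bd_mid x y t : 0 < t < 1 -> (x = 0 \/ x = 1 \/ y = 0 \/ y = 1) -> risk (x,y) t = PInf.
Proof. intros Ht H. unfold risk; cbn [fst snd].
  destruct H as [H|[H|H]].
  - rewrite (KL_inf t x) by lra. rewrite er_scale_pinf by lra. apply er_add_pinf_l.
  - rewrite (KL_inf t x) by lra. rewrite er_scale_pinf by lra. apply er_add_pinf_l.
  - rewrite (KL_inf t y) by lra. rewrite er_scale_pinf by lra. apply er_add_pinf_r.
Qed.


Lemma r0_cases x y : 0 <= x <= 1 ->
  (x = 1 /\ risk (x,y) 0 = PInf) \/ (x < 1 /\ risk (x,y) 0 = Fin (- ln (1-x) + 0)).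
Proof. intro. rewrite risk0; cbn [fst]. destruct (Req_dec x 1).
  - left. subst. rewrite KL0_1. auto.
  - right. rewrite KL0 by lra. split; [lra|reflexivity]. Qed.
Lemma r1_cases x y : 0 <= y <= 1 ->
  (y = 0 /\ risk (x,y) 1 = PInf) \/ (0 < y /\ risk (x,y) 1 = Fin (0 + - ln y)).
Proof. intro. rewrite risk1; cbn [snd]. destruct (Req_dec y 0).
  - left. subst. rewrite KL1_0. auto.
  - right. rewrite KL1 by lra. split; [lra|reflexivity]. Qed.

Lemma compl d : InD d -> ~ A_cls d -> exists d', A_cls d' /\ dominates d' d.
Proof. destruct d as [x y]. unfold InD, A_cls, C_lt, C_eq, M_cls; cbn [fst snd].
  intros [Hx Hy] HnA.
  destruct (classic (0 < x < 1 /\ 0 < y < 1)) as [Hint|Hbd].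
  - assert (Hyx : y < x).
    { destruct (Rtotal_order x y) as [h|[h|h]]; [exfalso; apply HnA; left; lra|exfalso; apply HnA; right; left; lra|lra]. }
    set (c := x / (1 + x - y)).
    assert (Hc : c * (1 + x - y) = x) by (unfold c; field; lra).
    assert (Hc0 : 0 < c) by (unfold c; apply Rdiv_lt_0_compat; lra).
    assert (Hc1 : c < x) by nra.
    exists (c, c). split; [right; left; cbn; lra|]. split.
    + intros t Ht. rewrite !risk_int by lra. simpl. apply (cmp_ineq x y t); lra.
    + exists 0. split; [lra|]. rewrite !risk_int by lra. apply er_lt_fin. unfold P.
      assert (ln (1-x) < ln (1-c)) by (apply ln_increasing; lra). lra.
  - assert (Hb : x = 0 \/ x = 1 \/ y = 0 \/ y = 1) by lra.
    assert (Hn01 : (x, y) <> (0, 1)) by (intro E; apply HnA; right; right; exact E).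
    exists (0, 1). split; [right; right; reflexivity|]. split.
    + intros t Ht. destruct (Req_dec t 0) as [->|H0]; [|destruct (Req_dec t 1) as [->|H1]].
      * rewrite risk01_0. destruct (r0_cases x y Hx) as [[_ ->]|[h ->]]; simpl; auto.
        destruct (Req_dec x 0) as [->|hx]. replace (1-0) with 1 by ring. rewrite ln_1; lra.
        pose proof (ln_pos_lt (1-x)). lra.
      * rewrite risk01_1. destruct (r1_cases x y Hy) as [[_ ->]|[h ->]]; simpl; auto.
        destruct (Req_dec y 1) as [->|hy]. rewrite ln_1; lra.
        pose proof (ln_pos_lt y). lra.
      * rewrite risk01_mid by lra. rewrite risk_bd_mid by lra. simpl. auto.
    + destruct (Req_dec x 0) as [hx|hx].
      * assert (y <> 1) by (intro; apply Hn01; subst; reflexivity).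
        exists 1. split; [lra|]. rewrite risk01_1.
        destruct (r1_cases x y Hy) as [[_ ->]|[h ->]]; [apply er_lt_pinf|].
        apply er_lt_fin. pose proof (ln_pos_lt y). lra.
      * exists 0. split; [lra|]. rewrite risk01_0.
        destruct (r0_cases x y Hx) as [[_ ->]|[h ->]]; [apply er_lt_pinf|].
        apply er_lt_fin. pose proof (ln_pos_lt (1-x)). lra.
Qed.

Lemma A_InD d : A_cls d -> InD d.
Proof. destruct d as [x y]. unfold A_cls, C_lt, C_eq, M_cls, InD; cbn [fst snd].
  intros [H|[H|H]]; try lra. injection H; intros; subst; lra. Qed.

Theorem theorem1 :
  minimal_complete A_cls /\ (forall d : decision, admissible d <-> A_cls d).
Proof.
  split.
  - split.
    + split; [exact A_InD | exact compl].
    + intros C' Hsub [d [Ad nC'd]] [HC'in HC'c].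
      destruct (HC'c d (A_InD d Ad) nC'd) as [d' [C'd' Hdom]].
      destruct (A_adm d Ad) as [_ Hno]. apply Hno. exists d'. split; auto.
  - intro d. split.
    + intros [HD Hno]. apply NNPP. intro HnA.
      destruct (compl d HD HnA) as [d' [Ad' Hdom]].
      apply Hno. exists d'. split; auto. apply A_InD; auto.
    + apply A_adm.
Qed.
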